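(* Let $a>0$ and $0\le r_0<a$, and consider, in polar coordinates $(r,\theta)$ about a pole $O$, the circle of radius $a$ whose centre $C$ has polar coordinates $(r_0,\theta_0)$. Thus $O$ lies strictly inside the circle, and for each direction $\theta$ the ray from $O$ in direction $\theta$ meets the circle at distance $$r(\theta)=r_0\cos(\theta-\theta_0)+\sqrt{a^2-r_0^2\sin^2(\theta-\theta_0)}$$ from $O$. Let $\theta_1<\theta_2<\theta_3<\theta_4<\theta_1+\pi$ and set $\theta_{i+4}=\theta_i+\pi$ for $i=1,2,3,4$ and $\theta_9=\theta_1+2\pi$. The four lines through $O$ in the directions $\theta_1,\theta_2,\theta_3,\theta_4$ divide the disc into eight sectors; for $1\le i\le 8$ let $$S_i=\frac12\int_{\theta_i}^{\theta_{i+1}} r(\theta)^2\,d\theta$$ be the area of the sector $\{O+\rho(\cos\theta,\sin\theta):\ \theta_i\le\theta\le\theta_{i+1},\ 0\le\rho\le r(\theta)\}$. Then $$S_1+S_3+S_5+S_7=S_2+S_4+S_6+S_8$$ if and only if $$\frac{r_0^2}{2}\Big[\sin 2(\theta_2-\theta_0)-\sin 2(\theta_1-\theta_0)+\sin 2(\theta_4-\theta_0)-\sin 2(\theta_3-\theta_0)\Big]+a^2\Big(\theta_2-\theta_1+\theta_4-\theta_3-\frac{\pi}{2}\Big)=0 .$$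
   Context: Polar coordinates are taken about the pole $O$; the point with polar coordinates $(r,\theta)$ is $O+r(\cos\theta,\sin\theta)$. The alternative sector sums are the sums of the areas of the odd-indexed sectors and of the even-indexed sectors, respectively. *)

(* Defs.v *)
From Stdlib Require Import Reals.
From Coquelicot Require Import Coquelicot.
Open Scope R_scope.

Definition rad (a r0 t0 t : R) : R :=
  r0 * cos (t - t0) + sqrt (a ^ 2 - r0 ^ 2 * (sin (t - t0)) ^ 2).

Definition sector_area (a r0 t0 u v : R) : R :=
  / 2 * RInt (fun t => (rad a r0 t0 t) ^ 2) u v.

(* Main.v *)
Require Import Defs.
From Stdlib Require Import Reals Lra.
From Coquelicot Require Import Coquelicot.
Open Scope R_scope.

Section Aux.
Variables (a r0 t0 : R).
Hypotheses (ha : 0 < a) (hr0 : 0 <= r0) (hr0a : r0 < a).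

Definition f (t : R) : R := (rad a r0 t0 t) ^ 2.
Definition H (t : R) : R := 2 * (a ^ 2 * t + r0 ^ 2 / 2 * sin (2 * (t - t0))).
Definition dH (t : R) : R := 2 * (a ^ 2 + r0 ^ 2 * cos (2 * (t - t0))).

Lemma pos_arg t : 0 < a ^ 2 - r0 ^ 2 * sin (t - t0) ^ 2.
Proof.
  assert (Hs := SIN_bound (t - t0)).
  assert (0 <= sin (t - t0) ^ 2 <= 1) by (split; nra).
  nra.
Qed.

Lemma f_cont (t : R) : continuous f t.
Proof.
  apply (@ex_derive_continuous R_AbsRing R_NormedModule). unfold f, rad.
  assert (P := pos_arg t).
  auto_derive. exact P.
Qed.

Lemma f_ex u v : ex_RInt f u v.
Proof. apply (@ex_RInt_continuous R_CompleteNormedModule). intros; apply f_cont. Qed.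

Lemma f_pair t : f t + f (t + PI) = dH t.
Proof.
  unfold f, dH, rad.
  replace (t + PI - t0) with ((t - t0) + PI) by ring.
  rewrite neg_sin, neg_cos.
  replace (2 * (t - t0)) with (2 * (t - t0)) by ring.
  rewrite cos_2a.
  assert (P := pos_arg t).
  replace ((- sin (t - t0)) ^ 2) with (sin (t - t0) ^ 2) by ring.
  assert (Q := sqrt_sqrt _ (Rlt_le _ _ P)).
  set (q := sqrt _) in *.
  assert (sin (t - t0) ^ 2 + cos (t - t0) ^ 2 = 1).
  { rewrite <- (sin2_cos2 (t - t0)). unfold Rsqr. ring. }
  nra.
Qed.

Lemma key u v : RInt f u v + RInt f (u + PI) (v + PI) = H v - H u.
Proof.
  assert (E : RInt f (u + PI) (v + PI) = RInt (fun t => f (t + PI)) u v).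
  { replace (u + PI) with (1 * u + PI) by ring.
    replace (v + PI) with (1 * v + PI) by ring.
    rewrite <- RInt_comp_lin by apply f_ex.
    apply RInt_ext. intros x _. rewrite (scal_one (V:=R_NormedModule)). f_equal. ring. }
  rewrite E.
  assert (E2 := @RInt_plus R_CompleteNormedModule f (fun t => f (t + PI)) u v (f_ex u v)).
  assert (ex_RInt (fun t => f (t + PI)) u v).
  { apply (@ex_RInt_continuous R_CompleteNormedModule). intros z _.
    apply (continuous_comp (fun t => t + PI) f).
    - apply (@ex_derive_continuous R_AbsRing R_NormedModule). auto_derive. auto.
    - apply f_cont. }
  specialize (E2 H0). simpl in E2. unfold plus in E2; simpl in E2.
  rewrite <- E2.
  rewrite (RInt_ext _ dH) by (intros; apply f_pair).
  apply is_RInt_unique.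
  assert (Hd := @is_RInt_derive R_CompleteNormedModule H dH u v).
  unfold minus, plus, opp in Hd; simpl in Hd.
  replace (H v - H u) with (H v + - H u) by ring.
  apply Hd.
  - intros x _. unfold H, dH. auto_derive; auto. unfold Rminus. field.
  - intros y _. apply (@ex_derive_continuous R_AbsRing R_NormedModule). unfold dH. auto_derive. auto.
Qed.

End Aux.

Theorem mainTheorem1 (a r0 t0 t1 t2 t3 t4 : R)
  (ha : 0 < a) (hr0 : 0 <= r0) (hr0a : r0 < a)
  (h12 : t1 < t2) (h23 : t2 < t3) (h34 : t3 < t4) (h41 : t4 < t1 + PI) :
  let t5 := t1 + PI in
  let t6 := t2 + PI in
  let t7 := t3 + PI in
  let t8 := t4 + PI in
  let t9 := t1 + 2 * PI in
  let S := sector_area a r0 t0 in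
  (S t1 t2 + S t3 t4 + S t5 t6 + S t7 t8 = S t2 t3 + S t4 t5 + S t6 t7 + S t8 t9)
  <->
  (r0 ^ 2 / 2 * (sin (2 * (t2 - t0)) - sin (2 * (t1 - t0))
                 + sin (2 * (t4 - t0)) - sin (2 * (t3 - t0)))
   + a ^ 2 * (t2 - t1 + t4 - t3 - PI / 2) = 0).
Proof.
  intros t5 t6 t7 t8 t9 S.
  unfold S, sector_area, t5, t6, t7, t8, t9.
  assert (K1 := key a r0 t0 ltac:(assumption) ltac:(assumption) t1 t2).
  assert (K2 := key a r0 t0 ltac:(assumption) ltac:(assumption) t3 t4).
  assert (K3 := key a r0 t0 ltac:(assumption) ltac:(assumption) t2 t3).
  assert (K4 := key a r0 t0 ltac:(assumption) ltac:(assumption) t4 (t1 + PI)).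
  replace (t1 + 2 * PI) with (t1 + PI + PI) by ring.
  unfold H in K1, K2, K3, K4.
  replace (2 * (t1 + PI - t0)) with (2 * (t1 - t0) + 2 * PI) in K4 by ring.
  rewrite sin_plus, sin_2PI, cos_2PI in K4.
  change (fun t : R => rad a r0 t0 t ^ 2) with (f a r0 t0).
  set (I1 := RInt _ t1 t2) in *.
  set (I2 := RInt _ t3 t4) in *.
  set (I3 := RInt _ t2 t3) in *.
  set (I4 := RInt _ t4 (t1 + PI)) in *.
  set (J1 := RInt _ (t1 + PI) (t2 + PI)) in *.
  set (J2 := RInt _ (t3 + PI) (t4 + PI)) in *.
  set (J3 := RInt _ (t2 + PI) (t3 + PI)) in *.
  set (J4 := RInt _ (t4 + PI) (t1 + PI + PI)) in *.
  split; intro Hyp; lra.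
Qed.
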